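(* There is an absolute constant $a_2>0$ such that for all integers $k\ge 80$, $n\ge 2k$ and every positive integer $m\le\frac{\ln k}{4}$, $$\int_{[0,n]^m}\psi\Big(\max_{i\in[m]}x_i-\frac1k\Big)\,dx\le 1+\frac{a_2^m}{k},$$ where $\psi(\gamma)=1$ for $\gamma<1$, $\psi(\gamma)=\frac2k$ for $\gamma\in[1,50]$, and $\psi(\gamma)=4k\,e^{-\frac{\gamma}{20}\ln k}$ for $\gamma>50$. *)

(* Defs.v *)
From HB Require Import structures.
From mathcomp Require Import all_boot all_order all_algebra.
From mathcomp Require Import all_classical all_reals all_analysis.
From mathcomp Require Import Rstruct Rstruct_topology.
From Stdlib Require Import Rdefinitions.
Set Implicit Arguments. Unset Strict Implicit. Unset Printing Implicit Defensive.
Import Order.TTheory GRing.Theory Num.Theory.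
Local Open Scope classical_set_scope.
Local Open Scope ring_scope.

Definition psi (k : nat) (g : R) : R :=
  if g < 1 then 1
  else if g <= 50 then 2 / k%:R
  else 4 * k%:R * expR (- (g / 20) * ln (k%:R)).

Definition scons (t : R) (x : nat -> R) : nat -> R :=
  fun i => if i is i'.+1 then x i' else t.

(* iterated Lebesgue integral over [0,n]^m of f (which only depends on the
   first m coordinates):  int_0^n ... int_0^n f(x_0,...,x_{m-1}) dx *)
Fixpoint cube_int (m : nat) (n : R) (f : (nat -> R) -> \bar R) : \bar R :=
  match m with
  | 0 => f (fun _ => 0)
  | m'.+1 => (\int[@lebesgue_measure R]_(t in `[(0:R), n]%classic) cube_int m' n (fun x => f (scons t x)))%E
  end.

(* max_{i in [m]} x_i  (for m >= 1; x 0 is one of the x_i) *)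
Definition maxm (m : nat) (x : nat -> R) : R :=
  \big[Num.max/x 0%N]_(i < m) x i.

(* Main.v *)
Require Import Defs.
From HB Require Import structures.
From mathcomp Require Import all_boot all_order all_algebra.
From mathcomp Require Import all_classical all_reals all_analysis.
From mathcomp Require Import Rstruct Rstruct_topology.
From Stdlib Require Import Rdefinitions.
From mathcomp Require Import measurable_realfun exponential_distribution.
From mathcomp Require Import ring lra.
Import Order.TTheory GRing.Theory Num.Theory.
Local Open Scope classical_set_scope.
Local Open Scope ring_scope.
Lemma le_integral_nm (D : set R) (f g : R -> \bar R) :
  (forall x, D x -> (0 <= f x)%E) -> (forall x, D x -> (f x <= g x)%E) ->
  (\int[@lebesgue_measure R]_(x in D) f x <= \int[@lebesgue_measure R]_(x in D) g x)%E.
Proof.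
move=> f0 fg.
have g0 : forall x, D x -> (0 <= g x)%E by move=> x Dx; exact: le_trans (f0 x Dx) (fg x Dx).
rewrite (ge0_integralE (@lebesgue_measure R) f0) (ge0_integralE (@lebesgue_measure R) g0) /=.
apply: ereal_sup_le => _ [h hf <-]; exists h => //= x.
apply: le_trans (hf x) _; rewrite /patch; case: ifP => // /[1!inE] Dx.
exact: fg.
Qed.

Lemma cube_int_ge0 (n : R) m (f : (nat -> R) -> \bar R) :
  (forall x, 0 <= f x)%E -> (0 <= cube_int m n f)%E.
Proof.
elim: m f => [|m IH] f f0 /=; first exact: f0.
by apply: integral_ge0 => t _; apply: IH.
Qed.
Lemma cube_le (n : R) (h1 h2 : R -> R) (r1 r2 : R) :
  (forall t, 0 <= h1 t) -> (forall t, 0 <= h2 t) ->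
  measurable_fun (T:=(R:realType)) (U:=(R:realType)) setT h1 -> measurable_fun (T:=(R:realType)) (U:=(R:realType)) setT h2 ->
  (\int[@lebesgue_measure R]_(t in `[(0:R), n]) (h1 t)%:E <= r1%:E)%E ->
  (\int[@lebesgue_measure R]_(t in `[(0:R), n]) (h2 t)%:E <= r2%:E)%E ->
  forall m (a b : R) (f : (nat -> R) -> \bar R), 0 <= a -> 0 <= b ->
  (forall x, 0 <= f x)%E ->
  (forall x, (forall i, 0 <= x i) ->
     (f x <= (a * \prod_(i < m) h1 (x i) + b * \prod_(i < m) h2 (x i))%:E)%E) ->
  (cube_int m n f <= (a * r1 ^+ m + b * r2 ^+ m)%:E)%E.
Proof.
move=> h10 h20 mh1 mh2 i1 i2.
have r10 : 0 <= r1.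
  by rewrite -lee_fin; apply: le_trans i1; apply: integral_ge0 => t _; rewrite lee_fin.
have r20 : 0 <= r2.
  by rewrite -lee_fin; apply: le_trans i2; apply: integral_ge0 => t _; rewrite lee_fin.
elim=> [|m IH] a b f a0 b0 f0 hf /=.
  by have := hf (fun _ => 0) (fun _ => lexx 0); rewrite !big_ord0 !expr0.
apply: (@le_trans _ _ (\int[@lebesgue_measure R]_(t in `[(0:R), n])
   ((a * r1 ^+ m) * h1 t + (b * r2 ^+ m) * h2 t)%:E)%E).
  apply: le_integral_nm => t Dt; first exact: cube_int_ge0.
  have t0 : 0 <= t by move: Dt; rewrite /= in_itv /= => /andP[].
  have -> : ((a * r1 ^+ m) * h1 t + (b * r2 ^+ m) * h2 t)
     = ((a * h1 t) * r1 ^+ m + (b * h2 t) * r2 ^+ m) by rewrite mulrAC [X in _ + X]mulrAC.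
  apply: IH; [exact: mulr_ge0|exact: mulr_ge0|by move=> x|].
  move=> x x0; apply: le_trans (hf (scons t x) _) _.
    by case=> [|i] //=.
  by rewrite !big_ord_recl /= !mulrA.
have mD : measurable (`[(0:R), n]%classic : set (measurableTypeR R)) by [].
under eq_integral do rewrite EFinD.
rewrite (ge0_integralD (@lebesgue_measure R) mD); last 4 first.
- by move=> t _; rewrite lee_fin mulr_ge0 // mulr_ge0 // exprn_ge0.
- apply/measurable_EFinP; apply: measurable_funM => //; exact: measurable_funTS.
- by move=> t _; rewrite lee_fin mulr_ge0 // mulr_ge0 // exprn_ge0.
- apply/measurable_EFinP; apply: measurable_funM => //; exact: measurable_funTS.
under eq_integral do rewrite EFinM.
under [X in (_ + X)%E]eq_integral do rewrite EFinM.
rewrite (ge0_integralZl_EFin (@lebesgue_measure R) mD); last 3 first.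
- by move=> t _; rewrite lee_fin.
- apply/measurable_EFinP; exact: measurable_funTS.
- by rewrite mulr_ge0 // exprn_ge0.
rewrite (ge0_integralZl_EFin (@lebesgue_measure R) mD); last 3 first.
- by move=> t _; rewrite lee_fin.
- apply/measurable_EFinP; exact: measurable_funTS.
- by rewrite mulr_ge0 // exprn_ge0.
rewrite EFinD !exprS ![_ * (r1 * _)]mulrCA ![_ * (r2 * _)]mulrCA.
apply: leeD.
  rewrite [X in (_ <= X)%E]EFinM [X in (_ <= X)%E]muleC lee_pmul //.
  by rewrite lee_fin mulr_ge0 // exprn_ge0.
  by apply: integral_ge0 => t _; rewrite lee_fin.
rewrite [X in (_ <= X)%E]EFinM [X in (_ <= X)%E]muleC lee_pmul //.
  by rewrite lee_fin mulr_ge0 // exprn_ge0.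
by apply: integral_ge0 => t _; rewrite lee_fin.
Qed.
Lemma int_h1 (n c : R) : 0 < c ->
  (\int[@lebesgue_measure R]_(t in `[(0:R), n]) (\1_(`]-oo, c[%classic : set R) t)%:E <= c%:E)%E.
Proof.
move=> c0.
rewrite integral_indic //.
apply: (@le_trans _ _ (@lebesgue_measure R `[(0:R), c])).
  apply: le_measure.
  - by rewrite inE; apply: measurableI; exact: measurable_itv.
  - by rewrite inE; exact: measurable_itv.
  move=> t [] /=; rewrite !in_itv /= => tc /andP[t0 _].
  by rewrite t0 ltW.
by rewrite lebesgue_measure_itv /= lte_fin c0 -EFinD subr0.
Qed.

Lemma int_h2 (n K : R) : 0 <= K ->
  (\int[@lebesgue_measure R]_(t in `[(0:R), n]) (K * exponential_pdf (5^-1 : R) t)%:E <= K%:E)%E.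
Proof.
move=> K0.
have r0 : (0 : R) <= 5^-1 by rewrite invr_ge0.
under eq_integral do rewrite EFinM.
rewrite (ge0_integralZl_EFin (@lebesgue_measure R)) //; last 2 first.
- by move=> t _; rewrite lee_fin exponential_pdf_ge0.
- by apply/measurable_EFinP; apply: measurable_funTS; exact: measurable_exponential_pdf.
rewrite -[X in (_ <= X)%E]mule1 lee_pmul //.
- by apply: integral_ge0 => t _; rewrite lee_fin exponential_pdf_ge0.
rewrite -(@integral_exponential_pdf R (5^-1)); last by rewrite invr_gt0.
apply: ge0_subset_integral => //.
- by apply/measurable_EFinP; exact: measurable_exponential_pdf.
- by move=> t _; rewrite lee_fin exponential_pdf_ge0.
Qed.
Lemma bigmax_seq_ge (I : eqType) (r : seq I) (F : I -> R) (s : R) :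
  s <= \big[Num.max/s]_(j <- r) F j /\ forall j, j \in r -> F j <= \big[Num.max/s]_(j <- r) F j.
Proof.
elim: r => [|a r [IH0 IH]]; first by rewrite big_nil.
rewrite big_cons; split; first by rewrite le_max IH0 orbT.
move=> j; rewrite in_cons => /orP[/eqP->|jr]; first by rewrite le_max lexx.
by rewrite le_max IH // orbT.
Qed.

Lemma maxm_ge m (x : nat -> R) : x 0%N <= maxm m x /\ forall i : nat, leq i.+1 m -> x i <= maxm m x.
Proof.
have [H0 H] := @bigmax_seq_ge _ (index_enum 'I_m) (fun i : 'I_m => x i) (x 0%N).
split; first exact: H0.
move=> i im; exact: (H (Ordinal im) (mem_index_enum _)).
Qed.

Definition KK : R := GRing.mul 30 (expR (51 / 5)).
Definition h1 (k : nat) : R -> R := \1_(`]-oo, 1 + k%:R^-1[%classic : set R).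
Definition h2 (t : R) : R := GRing.mul KK (exponential_pdf 5^-1 t).

Lemma h2E t : 0 <= t -> h2 t = 6 * expR ((51 - t) / 5).
Proof.
move=> t0; rewrite /h2 /KK exponential_pdfE //=.
have -> : (51 - t) / 5 = 51 / 5 + (- 5^-1 * t) :> R by field.
rewrite exp.expRD; field; exact: isT.
Qed.

Lemma h2_ge0 t : 0 <= h2 t.
Proof.
rewrite /h2 /KK; apply: mulr_ge0.
  by apply: mulr_ge0 => //; exact: ltW (expR_gt0 _).
by apply: exponential_pdf_ge0; rewrite invr_ge0.
Qed.

Lemma h1_ge0 k t : 0 <= h1 k t.
Proof. by rewrite /h1 indicE. Qed.
Lemma six_pow m : leq 1 m -> 6 <= (6%:R : R) ^+ m.
Proof.
case: m => // m _; rewrite exprS.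
have h : (1%:R : R) <= 6%:R ^+ m by apply: exprn_ege1; rewrite ler1n.
lra.
Qed.

Lemma point (k m : nat) (x : nat -> R) : leq 80 k -> leq 1 m ->
  m%:R <= ln (k%:R : R) / 4 -> (forall i, 0 <= x i) ->
  psi k (maxm m x - k%:R^-1) <=
    1 * \prod_(i < m) h1 k (x i) + k%:R^-1 * \prod_(i < m) h2 (x i).
Proof.
move=> k80 m1 mL x0.
have [M0 Mi] := maxm_ge m x.
set M := maxm m x in M0 Mi *.
set kR : R := k%:R.
have kR80 : 80 <= kR by rewrite /kR ler_nat.
have kpos : 0 < kR by lra.
have ki0 : 0 < kR^-1 by rewrite invr_gt0.
have ki1 : kR^-1 <= 1 by rewrite invf_le1 //; lra.
have P1 : 0 <= \prod_(i < m) h1 k (x i) by apply: prodr_ge0 => i _; exact: h1_ge0.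
have P2 : 0 <= \prod_(i < m) h2 (x i) by apply: prodr_ge0 => i _; exact: h2_ge0.
set g := M - kR^-1.
change (psi k g <= 1 * \prod_(i < m) h1 k (x i) + kR^-1 * \prod_(i < m) h2 (x i)).
rewrite /psi -/kR; case: ifP => [g1|/negbT]; last rewrite -leNgt => g1.
  rewrite big1 => [|i _]; last first.
    rewrite /h1 indicE mem_set //= in_itv /=.
    apply: le_lt_trans (Mi i (ltn_ord i)) _; rewrite /g in g1.
    by rewrite -ltrBlDr.
  by rewrite mul1r lerDl mulr_ge0 // ltW.
case: ifP => g50.
  have H : kR^-1 * \prod_(i < m) h2 (x i) <= 1 * \prod_(i < m) h1 k (x i) + kR^-1 * \prod_(i < m) h2 (x i).
    by rewrite lerDr mulr_ge0.
  apply: le_trans H.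
  rewrite [X in _ <= X]mulrC ler_wpM2r ?(ltW ki0) //.
  apply: (le_trans (_ : _ <= \prod_(i < m) (6%:R : R))).
    rewrite prodr_const card_ord; by apply: le_trans _ (six_pow _ m1); rewrite ler_nat.
  apply: (@ler_prod R) => i _; rewrite (ler0n R 6) /= h2E //.
  rewrite -[X in X <= _]mulr1 ler_wpM2l //.
  have : x i <= 51.
    apply: le_trans (Mi i (ltn_ord i)) _.
    have : M = g + kR^-1 by rewrite /g subrK.
    move=> ->; lra.
  move=> xi51; apply: le_trans (expR_ge1Dx _); rewrite lerDl.
  by rewrite divr_ge0 // subr_ge0.
move/negbT: g50; rewrite -ltNge => g50.
have gE : M = g + kR^-1 by rewrite /g subrK.
clearbody g.
have Mg : M <= g + 1 by rewrite gE lerD2l.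
set L := ln kR.
have kE : kR = expR L by rewrite /L lnK // posrE.
have mL2 : m%:R <= L / 4 by exact: mL.
clearbody L.

have L4 : 4 * m%:R <= L by lra.
set c := 6 * expR ((51 - M) / 5).
have Pc : \prod_(i < m) c <= \prod_(i < m) h2 (x i).
  apply: ler_prod => i _; rewrite /c h2E //; apply/andP; split.
    by rewrite mulr_ge0 // ltW // expR_gt0.
  rewrite ler_wpM2l // ler_expR ler_pM2r // lerD2l lerN2.
  exact: Mi i (ltn_ord i).
rewrite prodr_const card_ord /c exprMn -expRM_natl in Pc.
set E2 := expR (m%:R * ((51 - M) / 5)) in Pc.
have ex : expR L * expR (- (g / 20) * L) <= expR (- L) * E2.
  rewrite -!exp.expRD /E2 ler_expR.
  have h1' : 0 <= (g - 40) * (L - 4 * m%:R) by apply: mulr_ge0; lra.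
  have h2' : 0 <= m%:R * (g + 1 - M) by apply: mulr_ge0; [exact: ler0n|lra].
  have m0 : 0 <= (m%:R : R) := ler0n R m.
  nra.
have H4 : 4 <= (6%:R : R) ^+ m by apply: le_trans _ (six_pow _ m1); rewrite ler_nat.
apply: (le_trans (_ : _ <= kR^-1 * ((6%:R : R) ^+ m * E2))).
  rewrite kE -expRN -mulrA [X in _ <= X]mulrCA.
  by apply: ler_pM => //.
apply: le_trans (_ : kR^-1 * \prod_(i < m) h2 (x i) <= _).
  by rewrite ler_wpM2l // ltW.
by rewrite lerDr mulr_ge0.
Qed.
Lemma psi_ge0 k g : 0 <= psi k g.
Proof.
rewrite /psi; case: ifP => // _; case: ifP => _.
  by rewrite mulr_ge0 // invr_ge0.
by rewrite mulr_ge0 // ?mulr_ge0 // ltW // expR_gt0.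
Qed.

Lemma binom_bound (x : R) m : 0 <= x -> x <= 1 -> (1 + x) ^+ m <= 1 + (2 ^+ m - 1) * x.
Proof.
move=> x0 x1; elim: m => [|m IH]; first by rewrite !expr0 subrr mul0r addr0.
have h2m : 1 <= (2%:R : R) ^+ m by apply: exprn_ege1; rewrite ler1n.
have hp : 0 <= (1 + x) by lra.
rewrite !exprS.
have := ler_wpM2l hp IH.
have hx2 : x * x <= x by nra.
set y := (2%:R : R) ^+ m in h2m *.
have hq : 0 <= (y - 1) * (x - x * x) by apply: mulr_ge0; lra.
nra.
Qed.

Lemma KK_ge2 : 2 <= KK.
Proof.
rewrite /KK; set e := expR _.
have e1 : 1 <= e by rewrite /e; apply: le_trans _ (expR_ge1Dx _); lra.
clearbody e; lra.
Qed.

Theorem mainTheorem15 :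
  exists a2 : R, 0 < a2 /\
    forall k n m : nat, leq 80 k -> leq (2 * k)%N n -> leq 1 m ->
      m%:R <= ln (k%:R : R) / 4 ->
      (cube_int m n%:R (fun x => (psi k (maxm m x - k%:R^-1))%:E)
         <= (1 + a2 ^+ m / k%:R)%:E)%E.
Proof.
have K2 := KK_ge2.
exists (2 * KK); split; first lra.
move=> k n m k80 nk m1 mL.
have kR80 : 80 <= (k%:R : R) by rewrite ler_nat.
have kpos : 0 < (k%:R : R) by lra.
have ki0 : 0 < (k%:R : R)^-1 by rewrite invr_gt0.
have ki1 : (k%:R : R)^-1 <= 1 by rewrite invf_le1 //; lra.
have mh1 : measurable_fun (T:=(R:realType)) (U:=(R:realType)) setT (h1 k).
  by apply: measurable_indic; exact: measurable_itv.
have mh2 : measurable_fun (T:=(R:realType)) (U:=(R:realType)) setT h2.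
  rewrite /h2; apply: measurable_funM; first exact: measurable_cst.
  exact: measurable_exponential_pdf.
have c0 : 0 < 1 + (k%:R : R)^-1 by lra.
have K0 : 0 <= KK by lra.
have i1 := @int_h1 n%:R _ c0.
have i2 := @int_h2 n%:R _ K0.
have := @cube_le n%:R (h1 k) h2 _ _ (h1_ge0 k) h2_ge0 mh1 mh2 i1 i2 m _ _
  (fun x => (psi k (maxm m x - k%:R^-1))%:E) ler01 (ltW ki0).
move=> H; apply: le_trans (H _ _) _.
- by move=> x; rewrite lee_fin psi_ge0.
- by move=> x hx; rewrite lee_fin; exact: point.
rewrite lee_fin mul1r.
have B := @binom_bound _ m (ltW ki0) ki1.
have h2m : 2 <= (2%:R : R) ^+ m.
  move: m1; case: m {B mL H} => // m' _; rewrite exprS.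
  have : (1%:R : R) <= 2%:R ^+ m' by apply: exprn_ege1; rewrite ler1n.
  lra.
have hKm : 2 <= KK ^+ m.
  move: m1; case: m {B mL h2m H} => // m' _; rewrite exprS.
  have : 1 <= KK ^+ m' by apply: exprn_ege1; lra.
  nra.
rewrite [(2 * KK) ^+ m]exprMn.
set a := (2%:R : R) ^+ m in B h2m *.
set b := KK ^+ m in hKm *.
have hab : a + b <= a * b by nra.
have : (a + b) / k%:R <= (a * b) / k%:R by rewrite ler_wpM2r // ltW.
rewrite mulrDl.
move: B; set u := (k%:R : R)^-1.
have u0 : 0 < u := ki0.
clearbody u a b.
move: ((1 + u) ^+ m) => p hB hH.
nra.
Qed.
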